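(* Let $R$ be an arbitrary (not necessarily unital) associative ring. Then the full subcategory of s-unital left $R$-modules is closed under submodules, quotient modules, extensions, and all colimits (including direct sums and direct limits) in the abelian category of all (nonunital) left $R$-modules. In other words, it is a hereditary torsion class in that category.
   Context: Modules over a nonunital ring $R$ are not assumed unital; the category of all left $R$-modules is abelian. A left $R$-module $M$ is called s-unital if for every $m\in M$ there exists $e\in R$ (not necessarily idempotent) with $em=m$. *)

(* Defs.v *)
From HB Require Import structures.
From mathcomp Require Import all_boot all_algebra.
Set Implicit Arguments. Unset Strict Implicit. Unset Printing Implicit Defensive.
Import GRing.Theory.
Local Open Scope ring_scope.

Record nuRing := NuRing {
  rcar :> zmodType;
  rmul : rcar -> rcar -> rcar;
  rmulA : forall a b c, rmul a (rmul b c) = rmul (rmul a b) c;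
  rmulDl : forall a b c, rmul (a + b) c = rmul a c + rmul b c;
  rmulDr : forall a b c, rmul a (b + c) = rmul a b + rmul a c }.

Record lmod (R : nuRing) := LMod {
  mcar :> zmodType;
  act : R -> mcar -> mcar;
  actA : forall (r s : R) (m : mcar), act (rmul r s) m = act r (act s m);
  actDl : forall (r s : R) (m : mcar), act (r + s) m = act r m + act s m;
  actDr : forall (r : R) (m n : mcar), act r (m + n) = act r m + act r n }.

Arguments act {R} l r m : rename.

Definition is_hom (R : nuRing) (M N : lmod R) (f : M -> N) : Prop :=
  (forall x y : M, f (x + y) = f x + f y) /\
  (forall (r : R) (x : M), f (act M r x) = act N r (f x)).

Definition s_unital (R : nuRing) (M : lmod R) : Prop :=
  forall m : M, exists e : R, act M e m = m.

(* A diagram of modules indexed by a (small) quiver: vertices I, arrows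
   J i j, objects F i and morphisms phi i j a : F i -> F j.  (Diagrams on
   small categories are special cases; colimits coincide.) *)
Definition is_cocone (R : nuRing) (I : Type) (J : I -> I -> Type)
  (F : I -> lmod R) (phi : forall i j, J i j -> F i -> F j)
  (L : lmod R) (iota : forall i, F i -> L) : Prop :=
  (forall i, is_hom (iota i)) /\
  (forall i j (a : J i j) (x : F i), iota j (phi i j a x) = iota i x).

Definition is_colimit (R : nuRing) (I : Type) (J : I -> I -> Type)
  (F : I -> lmod R) (phi : forall i j, J i j -> F i -> F j)
  (L : lmod R) (iota : forall i, F i -> L) : Prop :=
  is_cocone phi iota /\
  forall (L' : lmod R) (iota' : forall i, F i -> L'),
    is_cocone phi iota' ->
    exists u : L -> L',
      [/\ is_hom u, (forall i x, u (iota i x) = iota' i x) &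
          (forall v : L -> L', is_hom v -> (forall i x, v (iota i x) = iota' i x) ->
             forall y, v y = u y)].

(* Main.v *)
Require Import Defs.
From HB Require Import structures.
From mathcomp Require Import all_boot all_algebra.
From mathcomp Require Import boolp.
Set Implicit Arguments. Unset Strict Implicit. Unset Printing Implicit Defensive.
Import GRing.Theory.
Local Open Scope ring_scope.

Section Basics.
Variable R : nuRing.

Lemma act0r (M : lmod R) (m : M) : act M 0 m = 0.
Proof.
have h := @actDl _ M 0 0 m. rewrite addr0 in h.
by apply: (addrI (act M 0 m)); rewrite addr0 -h.
Qed.

Lemma actr0 (M : lmod R) (r : R) : act M r 0 = 0.
Proof.
have h := @actDr _ M r 0 0. rewrite addr0 in h.
by apply: (addrI (act M r 0)); rewrite addr0 -h.
Qed.

Lemma actNl (M : lmod R) (r : R) (m : M) : act M (- r) m = - act M r m.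
Proof.
apply/eqP; rewrite -subr_eq0 opprK -actDl addNr act0r //.
Qed.

Lemma actBl (M : lmod R) (r s : R) (m : M) : act M (r - s) m = act M r m - act M s m.
Proof. by rewrite actDl actNl. Qed.

Lemma actNr (M : lmod R) (r : R) (m : M) : act M r (- m) = - act M r m.
Proof.
apply/eqP; rewrite -subr_eq0 opprK -actDr addNr actr0 //.
Qed.

Lemma actBr (M : lmod R) (r : R) (m n : M) : act M r (m - n) = act M r m - act M r n.
Proof. by rewrite actDr actNr. Qed.

Lemma hom0 (M N : lmod R) (f : M -> N) : is_hom f -> f 0 = 0.
Proof.
case=> hD _. have h := hD 0 0. rewrite addr0 in h.
by apply: (addrI (f 0)); rewrite addr0 -h.
Qed.

Lemma homN (M N : lmod R) (f : M -> N) x : is_hom f -> f (- x) = - f x.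
Proof.
move=> hf; apply/eqP; rewrite -subr_eq0 opprK; case: (hf) => hD _.
by rewrite -hD addNr hom0.
Qed.

Lemma homB (M N : lmod R) (f : M -> N) x y : is_hom f -> f (x - y) = f x - f y.
Proof. by move=> hf; case: (hf) => hD _; rewrite hD homN. Qed.

Lemma combine (M : lmod R) (y1 y2 : M) (x e : R) :
  act M x y2 = y2 -> act M e (y1 - act M x y1) = y1 - act M x y1 ->
  exists u : R, act M u (y1 + y2) = y1 + y2.
Proof.
move=> h2 h1; exists (x + e - rmul e x).
rewrite actBl actDl actA.
have hX : act M x (y1 + y2) = act M x y1 + y2 by rewrite actDr h2.
rewrite hX -addrA -actBr.
have -> : y1 + y2 - (act M x y1 + y2) = y1 - act M x y1.
  by rewrite opprD addrACA subrr addr0.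
by rewrite h1 addrC addrA subrK.
Qed.

End Basics.

Record subm (R : nuRing) (M : lmod R) := Subm {
  sp : M -> Prop;
  sp0 : sp 0;
  spD : forall x y, sp x -> sp y -> sp (x + y);
  spN : forall x, sp x -> sp (- x);
  spA : forall r x, sp x -> sp (act M r x) }.

Section SubMod.
Variables (R : nuRing) (M : lmod R) (X : subm M).

Definition Tt := {y : M | `[< sp X y >]}.
HB.instance Definition _ := [Choice of Tt by <:].

Definition tadd (a b : Tt) : Tt :=
  exist _ (val a + val b) (asboolT (spD (asboolW (valP a)) (asboolW (valP b)))).
Definition topp (a : Tt) : Tt :=
  exist _ (- val a) (asboolT (spN (asboolW (valP a)))).
Definition tzero : Tt := exist _ 0 (asboolT (sp0 X)).
Definition tact (r : R) (a : Tt) : Tt :=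
  exist _ (act M r (val a)) (asboolT (spA r (asboolW (valP a)))).

Lemma taddA : associative tadd.
Proof. by move=> a b c; apply: val_inj; rewrite /= addrA. Qed.
Lemma taddC : commutative tadd.
Proof. by move=> a b; apply: val_inj; rewrite /= addrC. Qed.
Lemma tadd0 : left_id tzero tadd.
Proof. by move=> a; apply: val_inj; rewrite /= add0r. Qed.
Lemma taddN : left_inverse tzero topp tadd.
Proof. by move=> a; apply: val_inj; rewrite /= addNr. Qed.

HB.instance Definition _ := GRing.isZmodule.Build Tt taddA taddC tadd0 taddN.

Lemma tactA (r s : R) (m : Tt) : tact (rmul r s) m = tact r (tact s m).
Proof. by apply: val_inj; rewrite /= actA. Qed.
Lemma tactDl (r s : R) (m : Tt) : tact (r + s) m = tact r m + tact s m.
Proof. by apply: val_inj; rewrite /= actDl. Qed.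
Lemma tactDr (r : R) (m n : Tt) : tact r (m + n) = tact r m + tact r n.
Proof. by apply: val_inj; rewrite /= actDr. Qed.

Definition Tmod : lmod R := LMod tactA tactDl tactDr.

Lemma val_hom : is_hom (fun t : Tmod => (val t : M)).
Proof. by split. Qed.

End SubMod.

Unset Implicit Arguments.
Section Colim.
Variables (R : nuRing) (I : Type) (J : I -> I -> Type) (F : I -> lmod R)
          (phi : forall i j, J i j -> F i -> F j)
          (L : lmod R) (iota : forall i, F i -> L).
Hypothesis hcol : is_colimit phi iota.
Hypothesis hF : forall i, s_unital (F i).

Inductive TT : L -> Prop :=
 | TT0 : TT 0
 | TTS (i : I) (a : F i) (t : L) : TT t -> TT (iota i a + t).

Lemma iota_hom i : is_hom (iota i).
Proof. by case: hcol => [[h _] _]. Qed.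

Lemma TT_unital t : TT t -> exists e, act L e t = t.
Proof.
elim=> [|i a t0 _ [x hx]]; first by exists 0; rewrite act0r.
have [e he] := hF i (a - act (F i) x a).
apply: (combine (x := x) (e := e) hx).
have hi := iota_hom i.
have hw : iota i a - act L x (iota i a) = iota i (a - act (F i) x a).
  by rewrite homB //; case: hi => _ ->.
by rewrite hw; case: hi => _ <-; rewrite he.
Qed.

Lemma TTD s t : TT s -> TT t -> TT (s + t).
Proof.
move=> hs ht; elim: hs => [|i a s' _ IH]; first by rewrite add0r.
by rewrite -addrA; apply: TTS.
Qed.

Lemma TTN t : TT t -> TT (- t).
Proof.
elim=> [|i a t' _ IH]; first by rewrite oppr0; exact: TT0.
by rewrite opprD -homN; [apply: TTS | exact: iota_hom].
Qed.

Lemma TTA r t : TT t -> TT (act L r t).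
Proof.
elim=> [|i a t' _ IH]; first by rewrite actr0; exact: TT0.
rewrite actDr; case: (iota_hom i) => _ <-; exact: TTS.
Qed.

Definition TX : subm L := Subm TT0 TTD TTN TTA.

Lemma TT_iota i (x : F i) : TT (iota i x).
Proof. by rewrite -[iota i x]addr0; apply: TTS; exact: TT0. Qed.

Definition iota' i (x : F i) : Tmod TX := exist _ (iota i x) (asboolT (TT_iota i x)).

Lemma cocone' : is_cocone phi iota'.
Proof.
split.
  move=> i; split.
    by move=> x y; apply: val_inj; rewrite /= (proj1 (iota_hom i)).
  by move=> r x; apply: val_inj; rewrite /= (proj2 (iota_hom i)).
by move=> i j a x; apply: val_inj; rewrite /= (proj2 (proj1 hcol)).
Qed.

Lemma colim_unital : s_unital L.
Proof.
move=> y.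
have [u [hu hu1 _]] := proj2 hcol (Tmod TX) iota' cocone'.
have [u0 [_ _ huniq]] := proj2 hcol L iota (proj1 hcol).
have e1 : y = u0 y.
  apply: (huniq id) => //; split => //.
have e2 : val (u y) = u0 y.
  apply: (huniq (fun z => val (u z))).
    split.
      by move=> a b; rewrite (proj1 hu).
    by move=> r a; rewrite (proj2 hu).
  by move=> i x; rewrite hu1.
apply: TT_unital; rewrite e1 -e2; exact: (asboolW (valP (u y))).
Qed.
End Colim.

Theorem proposition2p2 (R : nuRing) :
  (* closed under submodules (monomorphisms) *)
  (forall (N M : lmod R) (f : N -> M),
      is_hom f -> injective f -> s_unital M -> s_unital N) /\
  (* closed under quotient modules (epimorphisms) *)
  (forall (M Q : lmod R) (g : M -> Q),
      is_hom g -> (forall q, exists m, g m = q) -> s_unital M -> s_unital Q) /\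
  (* closed under extensions: 0 -> N -f-> M -g-> P -> 0 exact *)
  (forall (N M P : lmod R) (f : N -> M) (g : M -> P),
      is_hom f -> is_hom g -> injective f -> (forall q, exists m, g m = q) ->
      (forall m : M, g m = 0 <-> exists n : N, f n = m) ->
      s_unital N -> s_unital P -> s_unital M) /\
  (* closed under all (small) colimits *)
  (forall (I : Type) (J : I -> I -> Type) (F : I -> lmod R)
          (phi : forall i j, J i j -> F i -> F j)
          (L : lmod R) (iota : forall i, F i -> L),
      (forall i j (a : J i j), is_hom (phi i j a)) ->
      is_colimit phi iota ->
      (forall i, s_unital (F i)) -> s_unital L).
Proof.
split.
  move=> N M f hf finj hM n; have [e he] := hM (f n).
  by exists e; apply: finj; rewrite (proj2 hf) he.
split.
  move=> M Q g hg gsurj hM q; have [m <-] := gsurj q; have [e he] := hM m.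
  by exists e; rewrite -(proj2 hg) he.
split.
  move=> N M P f g hf hg finj gsurj hex hN hP m.
  have [x hx] := hP (g m).
  have : g (m - act M x m) = 0 by rewrite homB // (proj2 hg) hx subrr.
  move/hex => [n hn]; have [e he] := hN n.
  have hw : act M e (m - act M x m) = m - act M x m by rewrite -hn -(proj2 hf) he.
  have [u hu] := combine (y1 := m) (y2 := 0) (actr0 _ x) hw.
  by exists u; rewrite addr0 in hu.
move=> I J F phi L iota _ hcol hF; exact: colim_unital hcol hF.
Qed.
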